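(* There exist elements $c_1,\dots,c_r$ of $\mathbb Q(R_{1,0},\dots,R_{r,1})$, independent of $n$, such that with $c_0=c_{r+1}=1$, $$\sum_{m=0}^{r+1}(-1)^m\,c_{r+1-m}\,R_{1,n+m}=0\qquad\text{for all } n\in\mathbb Z.$$
   Context: Fix an integer $r\ge1$ and let $I_r=\{1,\dots,r\}$. Let $R_{1,0},\dots,R_{r,0},R_{1,1},\dots,R_{r,1}$ be $2r$ algebraically independent indeterminates over $\mathbb Q$. The $A_r$ $Q$-system is the unique family $(R_{\alpha,n})_{0\le\alpha\le r+1,\ n\in\mathbb Z}$ of nonzero elements of $\mathbb Q(R_{1,0},\dots,R_{r,1})$ with these initial values, $R_{0,n}=R_{r+1,n}=1$ for all $n$, and $R_{\alpha,n+1}R_{\alpha,n-1}=R_{\alpha,n}^2+R_{\alpha+1,n}R_{\alpha-1,n}$ for $\alpha\in I_r$, $n\in\mathbb Z$. *)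

(* Defs.v *)
From HB Require Import structures.
From mathcomp Require Import all_boot all_order all_algebra.
Set Implicit Arguments. Unset Strict Implicit. Unset Printing Implicit Defensive.
Import Order.TTheory GRing.Theory Num.Theory.
Local Open Scope ring_scope.

(* Polynomial ring over Q in k indeterminates, built as iterated
   univariate polynomial rings: mpoly 0 = Q, mpoly k.+1 = (mpoly k)[X]. *)
Fixpoint mpoly (k : nat) : idomainType :=
  match k with
  | 0 => rat
  | k'.+1 => {poly (mpoly k')}
  end.

(* The i-th indeterminate (0 <= i < k) of mpoly k: the indeterminate
   adjoined at level i.+1, embedded as a constant in the higher levels. *)
Fixpoint mvar (k : nat) (i : nat) : mpoly k :=
  match k return mpoly k with
  | 0 => 0
  | k'.+1 => if i == k' then ('X : {poly (mpoly k')}) else (mvar k' i)%:P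
  end.

Definition ratfun (k : nat) : fieldType := {fraction (mpoly k)}.

Definition rvar (k i : nat) : ratfun k := tofrac (mvar k i).

(* R : nat -> int -> K is the A_r Q-system with initial data
   R_{a,0} = x_{a-1}, R_{a,1} = x_{r+a-1} (a = 1..r) in K = Q(x_0..x_{2r-1}). *)
Definition is_Qsystem (r : nat) (R : nat -> int -> ratfun (r + r)) : Prop :=
  [/\ forall a : nat, (1 <= a <= r)%N -> R a 0 = rvar (r + r) a.-1 /\
                                         R a 1 = rvar (r + r) (r + a.-1),
      forall n : int, R 0%N n = 1 /\ R r.+1 n = 1,
      forall (a : nat) (n : int), (a <= r.+1)%N -> R a n != 0 &
      forall (a : nat) (n : int), (1 <= a <= r)%N ->
        R a (n + 1) * R a (n - 1) = R a n ^+ 2 + R a.+1 n * R a.-1 n].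

(* Main.v *)
Require Import Defs.
From HB Require Import structures.
From mathcomp Require Import all_boot all_order all_algebra.
From mathcomp Require Import perm.
Import Order.TTheory GRing.Theory Num.Theory.
Local Open Scope ring_scope.

Definition rot (k p : nat) : nat := if (p < k)%N then p.+1 else if p == k then 0%N else p.
Definition unrot (k p : nat) : nat := if p == 0%N then k else if (p <= k)%N then p.-1 else p.
Lemma rotK k : cancel (rot k) (unrot k).
Proof.
move=> p; rewrite /rot /unrot; case: (ltngtP p k) => [h|h|->] //=.
- by rewrite h.
- by rewrite gtn_eqF ?(leq_ltn_trans _ h) // leqNgt h.
Qed.
Lemma rot_lt k m p : (k < m)%N -> (p < m)%N -> (rot k p < m)%N.
Proof.
move=> hk hp; rewrite /rot; case: ifP => h1; first exact: leq_ltn_trans h1 hk.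
by case: eqP => // _; exact: leq_ltn_trans (leq0n _) hk.
Qed.

Section Perm.
Variable K : fieldType.
Variables (m k : nat) (hk : (k < m)%N).
Definition frot (i : 'I_m) : 'I_m := Ordinal (rot_lt _ _ _ hk (ltn_ord i)).
Lemma frot_inj : injective frot.
Proof. move=> i j /(congr1 val) /= /(can_inj (rotK k)) h; exact: val_inj. Qed.
Definition prot : 'S_m := perm frot_inj.

Lemma det_rot_sim (F : nat -> nat -> K) :
  \det (\matrix_(i < m, j < m) F (rot k i) (rot k j)) = \det (\matrix_(i < m, j < m) F i j).
Proof.
have -> : \matrix_(i < m, j < m) F (rot k i) (rot k j) =
   row_perm prot (col_perm prot (\matrix_(i < m, j < m) F i j)).
  by apply/matrixP => i j; rewrite !mxE !permE.
rewrite row_permE col_permE !det_mulmx !det_perm odd_permV.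
by rewrite mulrCA -signr_addb addbb expr0 mulr1.
Qed.

Lemma det_rot_cross (F G : nat -> nat -> K) :
  \det (\matrix_(i < m, j < m) F (rot k i) j) * \det (\matrix_(i < m, j < m) G i (rot k j)) =
  \det (\matrix_(i < m, j < m) F i j) * \det (\matrix_(i < m, j < m) G i j).
Proof.
have -> : \matrix_(i < m, j < m) F (rot k i) j = row_perm prot (\matrix_(i < m, j < m) F i j).
  by apply/matrixP => i j; rewrite !mxE !permE.
have -> : \matrix_(i < m, j < m) G i (rot k j) = col_perm prot (\matrix_(i < m, j < m) G i j).
  by apply/matrixP => i j; rewrite !mxE !permE.
rewrite row_permE col_permE !det_mulmx !det_perm odd_permV.
by rewrite [_ * (-1) ^+ _]mulrC mulrACA -signr_addb addbb expr0 mul1r.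
Qed.
End Perm.

Section DJ.
Variable K : fieldType.

Lemma mx_block k l (E : nat -> nat -> K) :
  \matrix_(i < k + l, j < k + l) E i j =
  block_mx (\matrix_(i < k, j < k) E i j) (\matrix_(i < k, j < l) E i (k + j)%N)
           (\matrix_(i < l, j < k) E (k + i)%N j) (\matrix_(i < l, j < l) E (k + i)%N (k + j)%N).
Proof.
apply/matrixP => i j.
case: (split_ordP i) => i' ->; case: (split_ordP j) => j' ->;
  rewrite ?block_mxEul ?block_mxEur ?block_mxEdl ?block_mxEdr !mxE //.
Qed.

Lemma det_schur k l (A : 'M[K]_k) (B : 'M_(k, l)) C (D : 'M_l) : A \in unitmx ->
  \det (block_mx A B C D) = \det A * \det (D - C *m invmx A *m B).
Proof.
move=> hA.
have -> : block_mx A B C D = block_mx A 0 C 1%:M *m block_mx 1%:M (invmx A *m B) 0 (D - C *m invmx A *m B).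
  rewrite mulmx_block !mulmx1 !mul0mx !mulmx0 !mul1mx !addr0 ?add0r mulmxA (mulmxV hA) mul1mx.
  by rewrite mulmxA addrC subrK.
by rewrite det_mulmx det_lblock det_ublock !det1 mulr1 mul1r.
Qed.

Lemma det_mx22 (S : 'M[K]_2) : \det S = S 0 0 * S 1 1 - S 0 1 * S 1 0.
Proof.
rewrite (expand_det_row _ 0) !big_ord_recl big_ord0 addr0 /cofactor !det_mx11 !mxE /=.
have h1 : lift ord0 (ord0 : 'I_1) = 1 :> 'I_2 by apply: val_inj.
have h0 : lift 0 (ord0 : 'I_1) = 1 :> 'I_2 by apply: val_inj.
have h2 : lift (lift ord0 ord0) (ord0 : 'I_1) = 0 :> 'I_2 by apply: val_inj.
have h3 : (ord0 : 'I_2) = 0 by apply: val_inj.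
rewrite h2 h1 ?h0 h3 /bump /= expr0 expr1 !mul1r mulN1r mulrN.
by [].
Qed.
End DJ.

Lemma addn_ltF k i : (k + i < k)%N = false.
Proof. by rewrite ltnNge leq_addr. Qed.

Lemma mxsubE (R : fieldType) m n (M N : 'M[R]_(m, n)) i j : (M - N) i j = M i j - N i j.
Proof. by rewrite !mxE. Qed.

Lemma alg4 (R : fieldType) (a s t u v : R) :
  a * (a * (s * t - u * v)) = a * s * (a * t) - a * u * (a * v).
Proof. by rewrite [a * s * _]mulrACA [a * u * _]mulrACA mulrA mulrBr. Qed.

Section DJ2.
Variable K : fieldType.
Definition Mb k (E : nat -> nat -> K) (p q : nat) : 'M[K]_(k + 1) :=
  \matrix_(i < k + 1, j < k + 1) E (if (i < k)%N then i : nat else (k + p)%N) (if (j < k)%N then j : nat else (k + q)%N).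

Lemma DJabs k (E : nat -> nat -> K) : (\matrix_(i < k, j < k) E i j) \in unitmx ->
  \det (\matrix_(i < k, j < k) E i j) * \det (\matrix_(i < k + 2, j < k + 2) E i j) =
  \det (Mb k E 0 0) * \det (Mb k E 1 1) - \det (Mb k E 0 1) * \det (Mb k E 1 0).
Proof.
move=> hA.
set A := \matrix_(i < k, j < k) E i j.
set B := \matrix_(i < k, j < 2) E i (k + j)%N.
set C := \matrix_(i < 2, j < k) E (k + i)%N j.
set D := \matrix_(i < 2, j < 2) E (k + i)%N (k + j)%N.
have hM : forall p q : 'I_2, \det (Mb k E p q) = \det A * (D p q - (C *m invmx A *m B) p q).
  move=> p q; rewrite /Mb (mx_block K k 1 (fun i j => E (if (i < k)%N then i else (k + p)%N) (if (j < k)%N then j else (k + q)%N))).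
  have -> : \matrix_(i < k, j < k) E (if (i < k)%N then i : nat else (k + p)%N)
                                   (if (j < k)%N then j : nat else (k + q)%N) = A.
    by apply/matrixP => i j; rewrite !mxE !ltn_ord.
  rewrite det_schur // det_mx11 !mxE.
  rewrite !addn_ltF; congr (_ * (_ - _)).
  apply: eq_bigr => j _; rewrite !mxE addn_ltF ltn_ord ?addn0; congr (_ * _).
  by apply: eq_bigr => l _; rewrite !mxE addn_ltF ltn_ord ?addn0.
rewrite (mx_block K k 2 E) -/A -/B -/C -/D det_schur // det_mx22.
rewrite (hM 0 0) (hM 1 1) (hM 0 1) (hM 1 0).
rewrite !(mxsubE _ _ _ D (C *m invmx A *m B)).
exact: alg4.
Qed.
End DJ2.

Lemma I1 (n : int) (a b : nat) : n + (b.+1)%:Z - (a.+1)%:Z = n + b%:Z - a%:Z.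
Proof. by rewrite !intS addrCA [1 + (n + _)]addrC addrKA. Qed.
Lemma I2 (n : int) (a : int) (b : nat) : n + (b.+1)%:Z - a = (n + 1) + b%:Z - a.
Proof. by rewrite intS addrA. Qed.
Lemma I3 (n : int) (a b : nat) : n + b%:Z - (a.+1)%:Z = (n - 1) + b%:Z - a%:Z.
Proof. by rewrite intS opprD addrA [n + _ - 1]addrAC. Qed.

Section Toep.
Variable K : fieldType.
Variable x : int -> K.
Definition Tm m n : 'M[K]_m := \matrix_(i < m, j < m) x (n + (j : nat)%:Z - (i : nat)%:Z).
Definition T m n := \det (Tm m n).

Lemma rot_small k i : (i < k)%N -> rot k i = i.+1.
Proof. by rewrite /rot => ->. Qed.
Lemma if_k0 k (i : nat) : (i < k + 1)%N -> (if (i < k)%N then i else (k + 0)%N) = i.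
Proof.
move=> h; case: ltnP => // hk; rewrite addn0; apply/eqP.
by rewrite eqn_leq hk ?andbT /=; move: h; rewrite addn1 ltnS.
Qed.
Lemma if_k1 k (i : nat) : (i < k + 1)%N -> rot k (if (i < k)%N then i else (k + 1)%N) = i.+1.
Proof.
move=> h; case: ltnP => hk; first by rewrite rot_small.
have -> : i = k by apply/eqP; rewrite eqn_leq hk ?andbT /=; move: h; rewrite addn1 ltnS.
rewrite /rot addn_ltF addn1.
by rewrite (gtn_eqF (ltnSn k)).
Qed.

Lemma DJT k n : T k n != 0 -> T k n * T k.+2 n = T k.+1 n ^+ 2 - T k.+1 (n + 1) * T k.+1 (n - 1).
Proof.
move=> hT.
pose E := fun i j : nat => x (n + (rot k j)%:Z - (rot k i)%:Z).
have hA : \matrix_(i < k, j < k) E i j = Tm k n.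
  by apply/matrixP => i j; rewrite !mxE /E !rot_small // I1.
have hu : \matrix_(i < k, j < k) E i j \in unitmx by rewrite hA unitmxE unitfE.
have := DJabs K k E hu.
have hk2 : (k < k + 2)%N by rewrite addn2 ltnS leqnSn.
have hk1 : (k < k + 1)%N by rewrite addn1.
have -> : \det (\matrix_(i < k + 2, j < k + 2) E i j) = T (k + 2) n.
  by rewrite /E (det_rot_sim K (k + 2) k hk2 (fun i j : nat => x (n + j%:Z - i%:Z))).
have -> : \det (Mb K k E 0 0) = T (k + 1) n.
  have -> : Mb K k E 0 0 = \matrix_(i < k + 1, j < k + 1) x (n + (rot k j)%:Z - (rot k i)%:Z).
    by apply/matrixP => i j; rewrite !mxE /E !if_k0.
  by rewrite (det_rot_sim K (k + 1) k hk1 (fun i j : nat => x (n + j%:Z - i%:Z))).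
have -> : \det (Mb K k E 1 1) = T (k + 1) n.
  have -> : Mb K k E 1 1 = Tm (k + 1) n.
    by apply/matrixP => i j; rewrite !mxE /E !if_k1 // I1.
  by [].
have -> : \det (Mb K k E 0 1) * \det (Mb K k E 1 0) = T (k + 1) (n + 1) * T (k + 1) (n - 1).
  have -> : Mb K k E 0 1 = \matrix_(i < k + 1, j < k + 1) x ((n + 1) + j%:Z - (rot k i)%:Z).
    by apply/matrixP => i j; rewrite !mxE /E if_k0 // if_k1 // I2.
  have -> : Mb K k E 1 0 = \matrix_(i < k + 1, j < k + 1) x ((n - 1) + (rot k j)%:Z - i%:Z).
    by apply/matrixP => i j; rewrite !mxE /E if_k0 // if_k1 // I3.
  by rewrite (det_rot_cross K (k + 1) k hk1 (fun i j : nat => x (n + 1 + j%:Z - i%:Z))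
     (fun i j : nat => x (n - 1 + j%:Z - i%:Z))).
by rewrite hA addn1 addn2 expr2.
Qed.
End Toep.

Section Rec.
Variable K : fieldType.
Variable x : int -> K.

Lemma kerT m n (c : nat -> K) : T K x m n != 0 ->
  (forall j : 'I_m, \sum_(i < m) c i * x (n + (j : nat)%:Z - (i : nat)%:Z) = 0) ->
  forall i : 'I_m, c i = 0.
Proof.
move=> hT hc i.
have hu : Tm K x m n \in unitmx by rewrite unitmxE unitfE.
pose v : 'rV[K]_m := \row_(l < m) c l.
have hv : v *m Tm K x m n = 0.
  apply/matrixP => a j; rewrite !mxE -[RHS](hc j); apply: eq_bigr => l _; rewrite !mxE //.
have : v = 0 by rewrite -(mulmxK hu v) hv mul0mx.
by move/matrixP/(_ 0 i); rewrite !mxE.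
Qed.

Lemma ex_ker m n : T K x m.+1 n = 0 -> exists c : nat -> K, (exists i : 'I_m.+1, c i != 0) /\
  forall j : 'I_m.+1, \sum_(i < m.+1) c i * x (n + (j : nat)%:Z - (i : nat)%:Z) = 0.
Proof.
move=> h0; have /det0P [v vn0 hv] : \det (Tm K x m.+1 n) == 0 by rewrite /T in h0; rewrite h0.
exists (fun i => v 0 (inord i)); split.
  case: (pickP (fun i : 'I_m.+1 => v 0 i != 0)) => [i hi|hall].
    by exists i; rewrite inord_val.
  case/negP: vn0; apply/eqP/matrixP => a j; rewrite ord1 mxE.
  by move: (hall j) => /= /negbT; rewrite negbK => /eqP.
move=> j; move/matrixP/(_ 0 j): hv; rewrite !mxE => hj; rewrite -[RHS]hj.
by apply: eq_bigr => l _; rewrite inord_val !mxE.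
Qed.
End Rec.

Section Rec2.
Variable K : fieldType.
Variable x : int -> K.
Variable p : nat.
Hypothesis hN : forall n, T K x p.+1 n != 0.
Hypothesis hZ : forall n, T K x p.+2 n = 0.
Hypothesis hC : forall n, T K x p.+1 (n + 1) = T K x p.+1 n.

Definition Good (n : int) (c : nat -> K) :=
  forall j : 'I_p.+2, \sum_(i < p.+2) c i * x (n + (j : nat)%:Z - (i : nat)%:Z) = 0.
Definition Rel (n : int) (c : nat -> K) :=
  forall j : 'I_p.+1, \sum_(i < p.+2) c i * x (n + (j.+1)%:Z - (i : nat)%:Z) = 0.

Lemma shift_sum (c : nat -> K) (n : int) (j : nat) :
  \sum_(i < p.+2) c i * x (n + (j.+1)%:Z - (i : nat)%:Z) =
  c 0%N * x (n + (j.+1)%:Z) + \sum_(i < p.+1) c i.+1 * x (n + j%:Z - (i : nat)%:Z).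
Proof.
rewrite big_ord_recl /= subr0; congr (_ + _); apply: eq_bigr => i _.
by rewrite /bump /= add1n I1.
Qed.

Lemma normal_ker n : exists c : nat -> K, c 0%N = 1 /\ Good n c.
Proof.
have [c [[i0 hi0] hc]] := ex_ker K x p.+1 n (hZ n).
have c0 : c 0%N != 0.
  apply/negP => /eqP c00.
  have hk := kerT K x p.+1 n (fun i => c i.+1) (hN n).
  have hk' : forall i : 'I_p.+1, c i.+1 = 0.
    apply: hk => j; move: (hc (lift ord0 j)); rewrite lift0 shift_sum c00 mul0r add0r //.
  move: hi0; case: (unliftP ord0 i0) => [i'|] -> /=; first by rewrite /bump /= add1n hk' eqxx.
  by rewrite c00 eqxx.
exists (fun i => c i / c 0%N); split; first by rewrite divff.
move=> j; rewrite (eq_bigr (fun i : 'I_p.+2 => c i * x (n + (j : nat)%:Z - (i : nat)%:Z) * (c 0%N)^-1)).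
  by rewrite -mulr_suml hc mul0r.
by move=> i _; rewrite mulrAC.
Qed.

Lemma uniq_ker n c c' : c 0%N = c' 0%N -> Rel n c -> Rel n c' -> forall i : 'I_p.+2, c i = c' i.
Proof.
move=> h0 hc hc'.
have hk := kerT K x p.+1 n (fun i => c i.+1 - c' i.+1) (hN n).
have hk' : forall i : 'I_p.+1, c i.+1 = c' i.+1.
  move=> i; apply/eqP; rewrite -subr_eq0; apply/eqP; apply: hk => j.
  have h1 := hc j; have h2 := hc' j; rewrite shift_sum in h1; rewrite shift_sum -h0 in h2.
  have h12 : \sum_(i < p.+1) c i.+1 * x (n + (j : nat)%:Z - (i : nat)%:Z) =
              \sum_(i < p.+1) c' i.+1 * x (n + (j : nat)%:Z - (i : nat)%:Z).
    by apply: (@addrI _ (c 0%N * x (n + ((j : nat).+1)%:Z))); rewrite h1 h2.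
  by rewrite (eq_bigr (fun i : 'I_p.+1 => c i.+1 * x (n + j%:Z - i%:Z) - c' i.+1 * x (n + j%:Z - i%:Z)))
    ?sumrB ?h12 ?subrr // => l _; rewrite mulrBl.
move=> i; case: (unliftP ord0 i) => [i'|] -> /=; first by rewrite /bump /= add1n hk'.
exact: h0.
Qed.

Lemma Good_Rel_lo n c : Good n c -> Rel n c.
Proof. by move=> h j; move: (h (lift ord0 j)); rewrite lift0. Qed.

Lemma Good_Rel_hi n c : Good (n + 1) c -> Rel n c.
Proof.
move=> h j; rewrite -[RHS](h (widen_ord (leqnSn _) j)); apply: eq_bigr => i _.
by rewrite I2.
Qed.

Lemma Good_eq n (c c' : nat -> K) : (forall i : 'I_p.+2, c i = c' i) -> Good n c' -> Good n c.
Proof. by move=> he h j; rewrite -[RHS](h j); apply: eq_bigr => i _; rewrite he. Qed.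


Lemma allGood : exists c : nat -> K, c 0%N = 1 /\ forall n, Good n c.
Proof.
have [c [c0 hc]] := normal_ker 0.
exists c; split => //.
have up : forall n, Good n c -> Good (n + 1) c.
  move=> n hn; have [c' [c'0 hc']] := normal_ker (n + 1).
  apply: (@Good_eq _ c c') => //; apply: (@uniq_ker n).
  - by rewrite c0 c'0.
  - exact: Good_Rel_lo.
  - exact: Good_Rel_hi.
have down : forall n, Good (n + 1) c -> Good n c.
  move=> n hn; have [c' [c'0 hc']] := normal_ker n.
  apply: (@Good_eq _ c c') => //; apply: (@uniq_ker n).
  - by rewrite c0 c'0.
  - exact: Good_Rel_hi.
  - exact: Good_Rel_lo.
have hk : forall k : nat, Good k%:Z c /\ Good (- k%:Z) c.
  elim=> [|k [h1 h2]]; first by rewrite oppr0.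
  split; first by rewrite -addn1 PoszD; apply: up.
  apply: down.
  have -> : - (k.+1)%:Z + 1 = - k%:Z by rewrite intS opprD addrAC addNr add0r.
  exact: h2.
move=> n; case: n => k; first by case: (hk k).
by rewrite NegzE; case: (hk k.+1).
Qed.

Definition Pc (c : nat -> K) : 'M[K]_p.+1 :=
  \matrix_(i < p.+1, j < p.+1) if (i : nat) == 0%N then - c (j : nat).+1 else ((i : nat) == (j : nat).+1)%:R.

Lemma det_Pc c : \det (Pc c) = (-1) ^+ p.+1 * c p.+1.
Proof.
rewrite (expand_det_col _ ord_max) big_ord_recl big1 ?addr0; last first.
  move=> i _; rewrite !mxE /= eqSS (ltn_eqF (ltn_ord i)) mul0r //.
rewrite /cofactor.
have -> : row' ord0 (col' ord_max (Pc c)) = 1%:M.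
  by apply/matrixP => a b; rewrite !mxE /= /bump [(p <= b)%N]leqNgt ltn_ord /= add0n add1n eqSS.
by rewrite det1 mulr1 !mxE /= add0n exprS mulN1r !mulNr mulrC.
Qed.

Lemma Pc_shift c n : c 0%N = 1 -> Good (n + 1) c -> Tm K x p.+1 (n + 1) = Pc c *m Tm K x p.+1 n.
Proof.
move=> c0 hg; apply/matrixP => i j; rewrite !mxE.
case: (unliftP ord0 i) => [i'|] -> /=.
  rewrite (bigD1 (widen_ord (leqnSn p) i')) //= big1 ?addr0.
    by rewrite !mxE /= /bump /= add1n eqxx mul1r -I2 I1.
  move=> l hl; rewrite -val_eqE /= in hl.
  by rewrite !mxE /= /bump /= add1n eqSS eq_sym (negbTE hl) mul0r.
have := hg (widen_ord (leqnSn _) j); rewrite big_ord_recl /= c0 mul1r => /eqP; rewrite addr_eq0 => /eqP ->.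
rewrite -sumrN; apply: eq_bigr => l _.
by rewrite !mxE /= /bump /= add1n mulNr -I2 I1.
Qed.

Lemma rec_main : exists c : nat -> K, c 0%N = 1 /\ c p.+1 = (-1) ^+ p.+1 /\
  forall M : int, \sum_(i < p.+2) c i * x (M - (i : nat)%:Z) = 0.
Proof.
have [c [c0 hg]] := allGood.
exists c; split => //; split.
  have h := Pc_shift c 0 c0 (hg (0 + 1)).
  have := hC 0; rewrite /T h det_mulmx det_Pc => e.
  have e2 : (-1) ^+ p.+1 * c p.+1 = 1.
    by apply: (mulIf (hN 0)); rewrite mul1r.
  have s2 : (-1) ^+ p.+1 * (-1) ^+ p.+1 = 1 :> K by rewrite -exprMn mulrNN mulr1 expr1n.
  have -> : c p.+1 = (-1) ^+ p.+1 * ((-1) ^+ p.+1 * c p.+1) by rewrite mulrA s2 mul1r.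
  by rewrite e2 mulr1.
move=> M; rewrite -[RHS](hg M ord0); apply: eq_bigr => i _.
by rewrite addr0.
Qed.
End Rec2.

Fixpoint epsn (a : nat) : bool :=
  match a with 0 => false | 1 => false | a'.+2 => ~~ epsn a' end.

Lemma sgn_sq (F : fieldType) (b : bool) : (-1) ^+ b * (-1) ^+ b = 1 :> F.
Proof. by rewrite -signr_addb addbb expr0. Qed.

Lemma alg_step (F : fieldType) (Ra Ra1p Ra1m Ra1 Ra2 Ta Ta1p Ta1m Ta1 Ta2 s t : F) :
  s * s = 1 -> t * t = 1 -> Ta != 0 ->
  Ra = t * Ta -> Ra1p = s * Ta1p -> Ra1m = s * Ta1m -> Ra1 = s * Ta1 ->
  Ra1p * Ra1m = Ra1 ^+ 2 + Ra2 * Ra ->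
  Ta * Ta2 = Ta1 ^+ 2 - Ta1p * Ta1m ->
  Ra2 = - t * Ta2.
Proof.
move=> ss tt hT -> -> -> -> hQ hD.
have h1 : Ra2 * (t * Ta) = - (Ta * Ta2).
  rewrite hD opprB; apply: (@addrI _ ((s * Ta1) ^+ 2)); rewrite -hQ.
  rewrite mulrACA ss mul1r exprMn [s ^+ 2]expr2 ss mul1r.
  by rewrite addrC subrK.
have h2 : (Ra2 * t) * Ta = (- Ta2) * Ta by rewrite -mulrA h1 mulNr mulrC.
have h3 := mulIf hT h2.
by rewrite -[Ra2]mulr1 -tt mulrA h3 !mulNr mulrC.
Qed.
Arguments alg_step {F Ra Ra1p Ra1m Ra1 Ra2 Ta Ta1p Ta1m Ta1 Ta2 s t}.

Theorem mainTheorem2 (r : nat) (hr : (1 <= r)%N) (R : nat -> int -> ratfun (r + r))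
  (hR : is_Qsystem R) :
  exists c : nat -> ratfun (r + r),
    c 0%N = 1 /\ c r.+1 = 1 /\
    forall n : int,
      \sum_(m < r.+2) (-1) ^+ m * c (r.+1 - m)%N * R 1%N (n + (m : nat)%:Z) = 0.
Proof.
case: hR => hinit hbd hnz hQ.
pose x := R 1%N.
have hT : forall a, (a.+1 <= r.+1)%N -> forall n,
    R a n = (-1) ^+ (epsn a) * T _ x a n /\ R a.+1 n = (-1) ^+ (epsn a.+1) * T _ x a.+1 n.
  elim=> [|a IH] ha n.
    rewrite /T det_mx00 det_mx11 !mxE /= expr0 !mul1r (hbd n).1.
    by split => //; rewrite /x addr0 subr0.
  have IH' := IH (ltnW ha).
  split; first exact: (IH' n).2.
  have hTa : T _ x a n != 0.
    apply: contra (hnz a n (leq_trans (leqnSn a) (ltnW ha))) => /eqP h0.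
    by rewrite (IH' n).1 h0 mulr0.
  have ha1 : (1 <= a.+1 <= r)%N by rewrite ltn0Sn /= -ltnS.
  have := alg_step (sgn_sq _ (epsn a.+1)) (sgn_sq _ (epsn a)) hTa
    (IH' n).1 (IH' (n + 1)).2 (IH' (n - 1)).2 (IH' n).2 (hQ a.+1 n ha1) (DJT _ x a n hTa).
  by move=> ->; rewrite /= signrN.
have eT : forall n, T _ x r.+1 n = (-1) ^+ (epsn r.+1).
  move=> n; have := (hT r (leqnn _) n).2; rewrite (hbd n).2 => e.
  have := congr1 (fun y => (-1) ^+ epsn r.+1 * y) e.
  by rewrite /= mulr1 mulrA sgn_sq mul1r => ->.
have hN : forall n, T _ x r.+1 n != 0 by move=> n; rewrite eT signr_eq0.
have hC : forall n, T _ x r.+1 (n + 1) = T _ x r.+1 n by move=> n; rewrite !eT.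
have hZ : forall n, T _ x r.+2 n = 0.
  move=> n.
  have hTr : T _ x r n != 0.
    apply: contra (hnz r n (leqnSn r)) => /eqP h0.
    by rewrite (hT r (leqnn _) n).1 h0 mulr0.
  have := DJT _ x r n hTr; rewrite !eT expr2 subrr => /eqP; rewrite mulf_eq0 (negbTE hTr) /=.
  by move/eqP.
have [c [c0 [cN hc]]] := rec_main _ _ _ hN hZ hC.
exists (fun k => (-1) ^+ k * c k); split; first by rewrite expr0 mul1r.
split; first by rewrite cN -exprMn mulrNN mulr1 expr1n.
move=> n; have := hc (n + (r.+1)%:Z); rewrite (reindex_inj rev_ord_inj) /= => h.
rewrite -[RHS](mulr0 ((-1) ^+ r.+1)) -[in RHS]h mulr_sumr; apply: eq_bigr => m _.
have hx : x (n + (r.+1)%:Z - (r.+1 - m)%N%:Z) = R 1%N (n + (m : nat)%:Z).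
  by rewrite /x -(subzn (ltn_ord m : (m <= r.+1)%N)) opprB addrACA subrr addr0.
rewrite subSS hx mulrA -exprD subnKC; last exact: (ltn_ord m : (m <= r.+1)%N).
exact: (esym (mulrA _ _ _)).
Qed.
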